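(* Let $Q$ be a finite quiver of diameter $1$. As $\le$ ranges over all graphic orderings of $Q$, the simple labelings $\sigma_\le$ range over exactly the set of strict acyclic labelings of the simplification $Q^{\mathrm s}$.
   Context: Quivers: - $Q$ has diameter $1$ if no vertex is both the target of an arrow and the source of an arrow. - A sink is a vertex that is the target of some arrow; every other vertex (including isolated ones) is a source. - $d,c$ denote the source and target maps. Simplification: - An arrow $s\to t$ is isolated if it is the unique arrow from $s$ to $t$, and parallel otherwise. - A sink is isolating if it is the target of some isolated arrow. - $Q^{\mathrm s}$ is obtained from $Q$ by deleting all parallel arrows and all non-isolating sinks. Labelings: - A labeling is a map from the arrows to $\{+,-\}$. It is acyclic if reversing the arrows labelled $-$ yields an orientation of the underlying multigraph without directed cycles. - It is strict if every sink is the target of exactly one arrow labelled $+$. Graphic orderings: - A graphic ordering of $Q$ is a linear order $\le$ on the set of sources of $Q$. - It determines a labeling $\sigma_\le$ of $Q^{\mathrm s}$: for an arrow $x$ of $Q^{\mathrm s}$, $\sigma_\le(x)=+$ if and only if $d(x)$ is the $\le$-least element of $\{d(y)\mid y \text{ an arrow of } Q^{\mathrm s},\ c(y)=c(x)\}$. *)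

(* Defs.v *)
From mathcomp Require Import all_boot.
Set Implicit Arguments. Unset Strict Implicit. Unset Printing Implicit Defensive.

(* A finite quiver: finite vertex type V, finite arrow type A,
   source map d and target map c. Labels: true = '+', false = '-'. *)
Section Quiver.
Variables (V A : finType) (d c : A -> V).

Definition diameter1 : Prop := forall a b : A, c a <> d b.

Definition is_sink (v : V) : bool := [exists a : A, c a == v].
Definition is_source (v : V) : bool := ~~ is_sink v.

Definition isolated (a : A) : bool :=
  [forall b : A, ((d b == d a) && (c b == c a)) ==> (b == a)].

(* arrows of the simplification Q^s = the isolated arrows of Q
   (vertices of Q^s: sources of Q and isolating sinks = targets of
   isolated arrows; they play no further role in labelings). *)
Definition sarrow := {a : A | isolated a}.

Definition slabeling := {ffun sarrow -> bool}.

Definition orient (s : slabeling) : rel V :=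
  fun u v => [exists x : sarrow,
    if s x then (d (val x) == u) && (c (val x) == v)
           else (c (val x) == u) && (d (val x) == v)].

Definition acyclic_lab (s : slabeling) : Prop :=
  forall u v : V, orient s u v -> ~~ connect (orient s) v u.

Definition strict_lab (s : slabeling) : Prop :=
  forall v : V, [exists x : sarrow, c (val x) == v] ->
    #|[set x : sarrow | (c (val x) == v) && s x]| = 1.

(* graphic ordering: a linear order on the set of sources of Q
   (given as a relation on V whose restriction to sources is a linear order;
   its values outside the sources are irrelevant). *)
Definition graphic_ordering (le : rel V) : Prop :=
  [/\ {in is_source, reflexive le},
      {in is_source &, antisymmetric le},
      {in is_source & &, transitive le} &
      {in is_source &, total le}].

Definition sigma_of (le : rel V) : slabeling :=
  [ffun x : sarrow => [forall y : sarrow, (c (val y) == c (val x)) ==> le (d (val x)) (d (val y))]].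

End Quiver.

(* Main.v *)
Require Import Defs.
From mathcomp Require Import all_boot.

Set Implicit Arguments. Unset Strict Implicit. Unset Printing Implicit Defensive.

Lemma connect_ind' (T : finType) (e : rel T) (P : T -> Prop) x y :
  P x -> (forall a b, P a -> e a b -> P b) -> connect e x y -> P y.
Proof.
move=> Px step /connectP [p]; elim: p x Px => [|a p IH] x Px /=; first by move=> _ ->.
case/andP=> exa pa ly; exact: (IH a (step _ _ Px exa) pa ly).
Qed.

Lemma connect_first (T : finType) (e : rel T) x y :
  connect e x y -> x <> y -> exists2 w, e x w & connect e w y.
Proof.
case/connectP=> [[|w p]] /=; first by move=> _ ->.
case/andP=> exw pw ly _; exists w => //; apply/connectP; by exists p.
Qed.

Section H.
Variables (V A : finType) (d c : A -> V).
Hypothesis D1 : diameter1 d c.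

Lemma src_d (x : A) : is_source c (d x).
Proof. rewrite /is_source /is_sink; apply/existsPn => a; apply/eqP; exact: D1. Qed.

Lemma isol_inj (x y : sarrow d c) :
  c (val x) = c (val y) -> d (val x) = d (val y) -> x = y.
Proof.
move=> hc hd; apply: val_inj; have := valP y.
by move/forallP/(_ (val x)); rewrite hc hd !eqxx /= => /eqP.
Qed.

Lemma orientP (s : slabeling d c) u v : orient s u v ->
  exists x : sarrow d c, if s x then d (val x) = u /\ c (val x) = v
                         else c (val x) = u /\ d (val x) = v.
Proof.
case/existsP=> x hx; exists x; move: hx; case: (s x) => /andP [/eqP -> /eqP ->] //.
Qed.

Lemma orient_T (s : slabeling d c) x : s x -> orient s (d (val x)) (c (val x)).
Proof. by move=> hs; apply/existsP; exists x; rewrite hs !eqxx. Qed.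

Lemma orient_F (s : slabeling d c) x : ~~ s x -> orient s (c (val x)) (d (val x)).
Proof. by move=> hs; apply/existsP; exists x; rewrite (negbTE hs) !eqxx. Qed.

Section Dir1.
Variable le : rel V.
Hypothesis G : graphic_ordering c le.

Let refl u : is_source c u -> le u u.
Proof. by case: G => h _ _ _; apply: h. Qed.
Let antis u v : is_source c u -> is_source c v -> le u v -> le v u -> u = v.
Proof. by case: G => _ h _ _ hu hv h1 h2; apply: h => //; rewrite h1 h2. Qed.
Let trans u v w : is_source c u -> is_source c v -> is_source c w ->
  le u v -> le v w -> le u w.
Proof. by case: G => _ _ h _ hu hv hw; apply: (h v u w). Qed.
Let tot u v : is_source c u -> is_source c v -> le u v || le v u.
Proof. by case: G => _ _ _ h hu hv; apply: h. Qed.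

Notation sg := (sigma_of d c le).

Lemma sgE x : sg x = [forall y : sarrow d c,
  (c (val y) == c (val x)) ==> le (d (val x)) (d (val y))].
Proof. by rewrite ffunE. Qed.

Lemma exists_min (s : seq (sarrow d c)) : s <> [::] ->
  exists2 m, m \in s & forall z, z \in s -> le (d (val m)) (d (val z)).
Proof.
elim: s => [//|a s IH] _.
case: s IH => [|b s] IH.
  by exists a; rewrite ?mem_head // => z; rewrite inE => /eqP ->; apply: refl; apply: src_d.
case: (IH _) => // m ms hm.
case/orP: (tot (src_d (val a)) (src_d (val m))) => h.
  exists a; first exact: mem_head.
  move=> z; rewrite in_cons => /orP [/eqP ->|zs]; first by apply: refl; apply: src_d.
  by apply: (trans (src_d _) (src_d _) (src_d _) h); apply: hm.
exists m; first by rewrite in_cons ms orbT.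
by move=> z; rewrite in_cons => /orP [/eqP ->|zs] //; apply: hm.
Qed.

Lemma sg_strict : strict_lab sg.
Proof.
move=> v /existsP [x0 hx0].
pose S := [seq y <- enum (predT : pred (sarrow d c)) | c (val y) == v].
have : S <> [::].
  have : x0 \in S by rewrite mem_filter hx0 mem_enum.
  by case: S.
case/exists_min=> m; rewrite mem_filter => /andP [/eqP hm _] hmin.
apply/eqP/cards1P; exists m; apply/setP => y; rewrite !inE.
apply/idP/idP.
  case/andP=> /eqP hy; rewrite sgE => /forallP /(_ m); rewrite hy hm eqxx /= => h1.
  have h2 : le (d (val m)) (d (val y)) by apply: hmin; rewrite mem_filter hy eqxx mem_enum.
  apply/eqP; apply: isol_inj; first by rewrite hy hm.
  exact: antis (src_d _) (src_d _) h1 h2.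
move/eqP->; rewrite hm eqxx /= sgE; apply/forallP => z; apply/implyP => /eqP hz.
by apply: hmin; rewrite mem_filter hz hm eqxx mem_enum.
Qed.

Lemma inv_reach (x0 : sarrow d c) r :
  connect (orient sg) (d (val x0)) r ->
  (forall y : sarrow d c, c (val y) = r -> le (d (val x0)) (d (val y))) /\
  (forall y : sarrow d c, d (val y) = r -> le (d (val x0)) r).
Proof.
apply: (connect_ind' (P := fun r =>
  (forall y : sarrow d c, c (val y) = r -> le (d (val x0)) (d (val y))) /\
  (forall y : sarrow d c, d (val y) = r -> le (d (val x0)) r))).
  split=> y hy; first by exfalso; exact: (D1 hy).
  by apply: refl; apply: src_d.
move=> a b [I1 I2] /orientP [x]; case hs: (sg x); [case=> hd hc|case=> hc hd].
  have hq : le (d (val x0)) (d (val x)) by rewrite hd; apply: (I2 x).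
  split=> y hy.
    move: hs; rewrite sgE => /forallP /(_ y); rewrite hy hc eqxx /= => h.
    exact: trans (src_d _) (src_d _) (src_d _) hq h.
  by exfalso; apply: (D1 (a:=val x) (b:=val y)); rewrite hy.
split=> y hy; first by exfalso; apply: (D1 (a:=val y) (b:=val x)); rewrite hy.
by rewrite -hd; apply: I1.
Qed.

Lemma no_back x : ~~ sg x -> ~ connect (orient sg) (d (val x)) (c (val x)).
Proof.
rewrite sgE => /forallPn [y0]; rewrite negb_imply => /andP [/eqP hy0 hn] hc.
have [I1 _] := inv_reach hc.
by move: hn; rewrite I1.
Qed.

Lemma sg_acyclic : acyclic_lab sg.
Proof.
move=> u v /orientP [x]; case hs: (sg x); [case=> hd hc|case=> hc hd]; apply/negP => hcon.
  have neq : v <> u by rewrite -hd -hc; apply: D1.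
  case: (connect_first hcon neq) => w /orientP [x'].
  case hs': (sg x'); [case=> hd' hc'|case=> hc' hd'].
    by exfalso; apply: (D1 (a:=val x) (b:=val x')); rewrite hd' -hc.
  move=> hwu; apply: (no_back (x:=x')); first by rewrite hs'.
  rewrite hd' hc'; apply: connect_trans hwu _; apply: connect1.
  by rewrite -hd -hc; apply: orient_T; rewrite hs.
by apply: (no_back (x:=x)); [rewrite hs|rewrite hd hc].
Qed.

End Dir1.

Section Dir2.
Variable s : slabeling d c.
Hypothesis St : strict_lab s.
Hypothesis Ac : acyclic_lab s.

Notation e := (orient s).

Lemma conn_antisym u v : connect e u v -> connect e v u -> u = v.
Proof.
move=> huv hvu; case: (eqVneq u v) => // /eqP neq.
case: (connect_first huv neq) => w hw hwv.
by move: (Ac hw); rewrite (connect_trans hwv hvu).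
Qed.

Definition key v := #|[set w | connect e w v]|.

Lemma key_lt u v : connect e u v -> u <> v -> key u < key v.
Proof.
move=> huv neq; apply: proper_card; apply/properP; split.
  by apply/subsetP => w; rewrite !inE => hw; apply: connect_trans hw huv.
exists v; rewrite !inE ?connect0 //.
by apply/negP => hvu; apply: neq; apply: conn_antisym.
Qed.

Definition lek (u v : V) : bool :=
  (key u < key v) || ((key u == key v) && (enum_rank u <= enum_rank v)).

Lemma lek_refl u : lek u u.
Proof. by rewrite /lek eqxx leqnn orbT. Qed.

Lemma lek_anti u v : lek u v -> lek v u -> u = v.
Proof.
rewrite /lek => h1 h2.
have hk : key u = key v.
  case/orP: h1 => [h1|/andP [/eqP //]]; case/orP: h2 => [h2|/andP [/eqP h2 _]].
    by move: (ltn_trans h1 h2); rewrite ltnn.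
  by move: h1; rewrite h2 ltnn.
move: h1 h2; rewrite hk ltnn eqxx /= => h1 h2.
by apply: enum_rank_inj; apply: val_inj; apply/eqP; rewrite eqn_leq h1 h2.
Qed.

Lemma lek_trans : transitive lek.
Proof.
move=> v u w; rewrite /lek => /orP[h1|/andP[/eqP h1 h1']] /orP[h2|/andP[/eqP h2 h2']].
- by rewrite (ltn_trans h1 h2).
- by rewrite -h2 h1.
- by rewrite h1 h2.
- by rewrite h1 h2 eqxx (leq_trans h1' h2') orbT.
Qed.

Lemma lek_total u v : lek u v || lek v u.
Proof.
rewrite /lek; case: (ltngtP (key u) (key v)) => h //=.
by rewrite ?h ?eqxx ?orbF /= leq_total.
Qed.

Lemma conn_lek u v : connect e u v -> lek u v.
Proof.
move=> h; case: (eqVneq u v) => [->|/eqP neq]; first exact: lek_refl.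
by rewrite /lek key_lt.
Qed.

Lemma go : graphic_ordering c lek.
Proof.
split.
- by move=> u _; apply: lek_refl.
- by move=> u v _ _ /andP [h1 h2]; apply: lek_anti.
- by move=> v u w _ _ _; apply: lek_trans.
- by move=> u v _ _; apply: lek_total.
Qed.

Lemma sg_eq : sigma_of d c lek = s.
Proof.
apply/ffunP => x; rewrite ffunE.
have hS : #|[set y0 : sarrow d c | (c (val y0) == c (val x)) && s y0]| = 1.
  by apply: St; apply/existsP; exists x.
move/eqP/cards1P: hS => [m hm].
have hmem y : (y \in [set y0 : sarrow d c | (c (val y0) == c (val x)) && s y0]) = (y == m).
  by rewrite hm inE.
case hs: (s x).
  apply/forallP => y; apply/implyP => /eqP hy.
  case hsy: (s y).
    have : y == m by rewrite -hmem inE hy eqxx hsy.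
    have : x == m by rewrite -hmem inE eqxx hs.
    by move=> /eqP -> /eqP ->; apply: lek_refl.
  apply: conn_lek; apply: (connect_trans (y := c (val x))).
    by apply: connect1; apply: orient_T; rewrite hs.
  by rewrite -hy; apply: connect1; apply: orient_F; rewrite hsy.
have : m \in [set y0 : sarrow d c | (c (val y0) == c (val x)) && s y0] by rewrite hm set11.
rewrite inE => /andP [/eqP hcm hsm].
apply/negbTE/negP => /forallP /(_ m); rewrite hcm eqxx /= => hle.
have hxm : m <> x by move=> E; move: hs; rewrite -E hsm.
apply: hxm; apply: isol_inj; first by [].
apply: lek_anti; last exact: hle.
apply: conn_lek; apply: (connect_trans (y := c (val x))).
  by rewrite -hcm; apply: connect1; apply: orient_T.
by apply: connect1; apply: orient_F; rewrite hs.
Qed.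

End Dir2.
End H.

Theorem mainTheorem9 (V A : finType) (d c : A -> V) :
  diameter1 d c ->
  forall s : slabeling d c,
    (strict_lab s /\ acyclic_lab s) <->
    (exists le : rel V, graphic_ordering c le /\ @sigma_of V A d c le = s).
Proof.
move=> D1 s; split.
  case=> St Ac; exists (lek s); split; [exact: go | exact: sg_eq].
case=> le [G <-]; split; [exact: sg_strict | exact: sg_acyclic].
Qed.
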